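(* Let $n\ge 4$ and $2\le t\le n-2$. If all of the following hold: (i) $\mathsf{var}(W_1(t))\,\mathsf{var}(W_2(t))\ne \mathsf{cov}(W_1(t),W_2(t))^2$; (ii) $\mathsf{var}(D_1(t))\,\mathsf{var}(D_2(t))\ne \mathsf{cov}(D_1(t),D_2(t))^2$; (iii) $\mathsf{var}(D_1(t)+D_2(t))\ne 0$; (iv) $\mathsf{var}(W_1(t)+W_2(t))\ne 0$, then the covariance matrix $\Sigma(t)=\mathsf{var}(\vec a(t))$ is invertible, so that the statistic $S(t)$ is well defined.
   Context: Let $G_1,\dots,G_n$ be a sequence of observations (networks) and let $K_1,K_2$ be two real symmetric $n\times n$ kernel matrices computed from this sequence, with $(i,j)$ entry $k_{xij}$ of $K_x$, $x\in\{1,2\}$. The permutation null distribution assigns probability $1/n!$ to each of the $n!$ permutations of the sequence, i.e. the kernel matrices $K_x$ are replaced by $(k_{x\pi(i)\pi(j)})_{i,j}$ for a uniformly random permutation $\pi$ of $\{1,\dots,n\}$ (the same $\pi$ for both kernels); $\mathsf{E},\mathsf{var},\mathsf{cov}$ denote expectation, variance and covariance under this distribution. For $x\in\{1,2\}$ define \[ \alpha_x(t)=\frac{1}{t(t-1)}\sum_{i=1}^n\sum_{j\ne i}k_{xij}\mathbb{1}\{i,j\le t\},\qquad \beta_x(t)=\frac{1}{(n-t)(n-t-1)}\sum_{i=1}^n\sum_{j\ne i}k_{xij}\mathbb{1}\{i,j> t\}, \] \[ W_x(t)=\frac{t}{n}\alpha_x(t)+\frac{n-t}{n}\beta_x(t),\qquad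 D_x(t)=\frac{t(t-1)}{n(n-1)}\alpha_x(t)-\frac{(n-t)(n-t-1)}{n(n-1)}\beta_x(t). \] Let $\vec a(t)=[\alpha_1(t),\beta_1(t),\alpha_2(t),\beta_2(t)]^{\mathsf T}$, $\Sigma(t)=\mathsf{var}(\vec a(t))$, and \[ S(t)=[\vec a(t)-\mathsf{E}\vec a(t)]^{\mathsf T}\Sigma(t)^{-1}[\vec a(t)-\mathsf{E}\vec a(t)]. \] *)

(* Defs.v *)
From mathcomp Require Import all_boot all_order all_algebra.
From mathcomp Require Import fingroup perm.
Set Implicit Arguments. Unset Strict Implicit. Unset Printing Implicit Defensive.
Import Order.TTheory GRing.Theory Num.Theory.
Local Open Scope ring_scope.

Section Defs.
Variable R : realFieldType.
Variable n : nat.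

Definition Eperm (f : 'S_n -> R) : R := (n`!%:R)^-1 * \sum_(s : 'S_n) f s.
Definition covp (f g : 'S_n -> R) : R :=
  Eperm (fun s => (f s - Eperm f) * (g s - Eperm g)).
Definition varp (f : 'S_n -> R) : R := covp f f.

Definition permute_kernel (K : 'M[R]_n) (s : 'S_n) : 'M[R]_n :=
  \matrix_(i, j) K (s i) (s j).

(* Indices are 0-based: the paper's i <= t becomes (i : 'I_n) < t. *)
Definition alpha (K : 'M[R]_n) (t : nat) : R :=
  ((t * (t - 1))%:R)^-1 *
  \sum_(i < n) \sum_(j < n | j != i) K i j * ((i < t)%N && (j < t)%N)%:R.
Definition beta (K : 'M[R]_n) (t : nat) : R :=
  (((n - t) * (n - t - 1))%:R)^-1 *
  \sum_(i < n) \sum_(j < n | j != i) K i j * ((t <= i)%N && (t <= j)%N)%:R.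
Definition Wstat (K : 'M[R]_n) (t : nat) : R :=
  t%:R / n%:R * alpha K t + (n - t)%:R / n%:R * beta K t.
Definition Dstat (K : 'M[R]_n) (t : nat) : R :=
  (t * (t - 1))%:R / (n * (n - 1))%:R * alpha K t
  - ((n - t) * (n - t - 1))%:R / (n * (n - 1))%:R * beta K t.

Definition avec (K1 K2 : 'M[R]_n) (t : nat) (s : 'S_n) : 'cV[R]_4 :=
  \col_(k < 4)
    match val k with
    | 0 => alpha (permute_kernel K1 s) t
    | 1 => beta (permute_kernel K1 s) t
    | 2 => alpha (permute_kernel K2 s) t
    | _ => beta (permute_kernel K2 s) t
    end.

Definition Sigma (K1 K2 : 'M[R]_n) (t : nat) : 'M[R]_4 :=
  \matrix_(k, l) covp (fun s => avec K1 K2 t s k ord0) (fun s => avec K1 K2 t s l ord0).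

End Defs.

(* Main.v *)
Require Import Defs.
From mathcomp Require Import all_boot all_order all_algebra.
From mathcomp Require Import fingroup perm action alt primitive_action.
From mathcomp Require Import ring lra zify.
Set Implicit Arguments. Unset Strict Implicit. Unset Printing Implicit Defensive.
Import Order.TTheory GRing.Theory Num.Theory.
Local Open Scope ring_scope.

Lemma ntrans_perm (T : finType) m (u v : m.-tuple T) :
  (m <= #|T|)%N -> uniq u -> uniq v ->
  exists p : {perm T}, forall i, tnth v i = p (tnth u i).
Proof.
move=> lem uu uv.
have tr := ntransitive_weak lem (Sym_trans T).
have Hu : u \in m.-dtuple(setT) by rewrite inE uu; apply/subsetP=> x; rewrite inE.
have Hv : v \in m.-dtuple(setT) by rewrite inE uv; apply/subsetP=> x; rewrite inE.
have [a _ ->] := atransP2 tr Hu Hv.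
by exists a => i; rewrite tnth_map.
Qed.

Section Cov.
Variable R : realFieldType.
Variable n : nat.
Implicit Types f g h : 'S_n -> R.

Lemma fact_neq0 : (n`!%:R : R) != 0.
Proof. by rewrite pnatr_eq0 -lt0n fact_gt0. Qed.

Lemma Eperm_ext f g : (forall s, f s = g s) -> Eperm f = Eperm g.
Proof. by move=> e; rewrite /Eperm; congr (_ * _); apply: eq_bigr. Qed.

Lemma EpermD f g : Eperm (fun s => f s + g s) = Eperm f + Eperm g.
Proof. by rewrite /Eperm big_split mulrDr. Qed.

Lemma EpermZ a f : Eperm (fun s => a * f s) = a * Eperm f.
Proof. by rewrite /Eperm -mulr_sumr mulrCA. Qed.

Lemma Eperm_cst (c : R) : Eperm (fun _ : 'S_n => c) = c.
Proof.
rewrite /Eperm sumr_const card_Sn -[c *+ _]mulr_natr mulrCA mulVf ?mulr1 //.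
exact: fact_neq0.
Qed.

Lemma Eperm_sum (I : finType) (P : pred I) (F : I -> 'S_n -> R) :
  Eperm (fun s => \sum_(i | P i) F i s) = \sum_(i | P i) Eperm (F i).
Proof. by rewrite /Eperm exchange_big mulr_sumr. Qed.

Lemma Eperm_mulg p f : Eperm (fun s => f (p * s)%g) = Eperm f.
Proof. by rewrite /Eperm [in RHS](reindex_inj (mulgI p)). Qed.

Lemma covpE f g : covp f g = Eperm (fun s => f s * g s) - Eperm f * Eperm g.
Proof.
rewrite /covp.
rewrite (Eperm_ext (g := fun s => f s * g s + ((- Eperm g) * f s + ((- Eperm f) * g s + Eperm f * Eperm g)))); last first.
  by move=> s; ring.
rewrite !EpermD Eperm_cst !EpermZ; ring.
Qed.

Lemma covpC f g : covp f g = covp g f.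
Proof. by rewrite !covpE [Eperm g * _]mulrC; congr (_ - _); apply: Eperm_ext => s; rewrite mulrC. Qed.

Lemma covp_ext f f' g g' : (forall s, f s = f' s) -> (forall s, g s = g' s) ->
  covp f g = covp f' g'.
Proof.
move=> e1 e2; rewrite !covpE (Eperm_ext e1) (Eperm_ext e2).
by rewrite (Eperm_ext (g := fun s => f' s * g' s)) // => s; rewrite e1 e2.
Qed.

Lemma covpDl f f' g : covp (fun s => f s + f' s) g = covp f g + covp f' g.
Proof.
rewrite !covpE EpermD (Eperm_ext (g := fun s => f s * g s + f' s * g s)).
  by rewrite EpermD; ring.
by move=> s; ring.
Qed.

Lemma covpZl a f g : covp (fun s => a * f s) g = a * covp f g.
Proof.
rewrite !covpE EpermZ (Eperm_ext (g := fun s => a * (f s * g s))).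
  by rewrite EpermZ; ring.
by move=> s; ring.
Qed.

Lemma covp_cstl (c : R) g : covp (fun _ : 'S_n => c) g = 0.
Proof.
rewrite covpE Eperm_cst EpermZ; ring.
Qed.

Lemma covp_suml (I : finType) (P : pred I) (F : I -> 'S_n -> R) g :
  covp (fun s => \sum_(i | P i) F i s) g = \sum_(i | P i) covp (F i) g.
Proof.
rewrite covpE Eperm_sum.
rewrite (Eperm_ext (g := fun s => \sum_(i | P i) (F i s * g s))); last by move=> s; rewrite mulr_suml.
rewrite Eperm_sum mulr_suml -sumrB; apply: eq_bigr => i _; by rewrite covpE.
Qed.

Lemma covp_sumr (I : finType) (P : pred I) (F : I -> 'S_n -> R) g :
  covp g (fun s => \sum_(i | P i) F i s) = \sum_(i | P i) covp g (F i).
Proof. rewrite covpC covp_suml; apply: eq_bigr => i _; exact: covpC. Qed.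

Lemma covpZr a f g : covp g (fun s => a * f s) = a * covp g f.
Proof. by rewrite covpC covpZl covpC. Qed.

Lemma covp_mulg p f g : covp (fun s => f (p * s)%g) (fun s => g (p * s)%g) = covp f g.
Proof.
rewrite !covpE !Eperm_mulg; congr (_ - _).
exact: (Eperm_mulg p (fun s => f s * g s)).
Qed.

End Cov.
Section Pattern.
Variable R : realFieldType.
Variable n : nat.
Variable K : 'M[R]_n.
Variable phi : 'I_n -> R.
Hypothesis H3 : (3 <= n)%N.

Definition Cf (i j k : 'I_n) : R :=
  covp (fun s : 'S_n => K (s i) (s j)) (fun s => phi (s k)).

Lemma Cf_perm (p : 'S_n) i j k : Cf (p i) (p j) (p k) = Cf i j k.
Proof.
rewrite /Cf -(covp_mulg p (fun s : 'S_n => K (s i) (s j)) (fun s => phi (s k))).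
by apply: covp_ext => s; rewrite !permM.
Qed.

Definition i0 : 'I_n := Ordinal (leq_trans (isT : (0 < 3)%N) H3).
Definition j0 : 'I_n := Ordinal (leq_trans (isT : (1 < 3)%N) H3).
Definition k0 : 'I_n := Ordinal (leq_trans (isT : (2 < 3)%N) H3).

Lemma Cf_pattern i j k : i != j ->
  Cf i j k = if k == i then Cf i0 j0 i0 else if k == j then Cf i0 j0 j0 else Cf i0 j0 k0.
Proof.
move=> nij.
have c2 : (2 <= #|'I_n|)%N by rewrite card_ord (leq_trans _ H3).
have c3 : (3 <= #|'I_n|)%N by rewrite card_ord.
have u2 : uniq [tuple i0; j0] by rewrite /= ?inE.
have v2 : uniq [tuple i; j] by rewrite /= inE andbT.
have [p Hp] := ntrans_perm c2 u2 v2.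
have ei : i = p i0 by exact: (Hp ord0).
have ej : j = p j0 by exact: (Hp (lift ord0 ord0)).
case: eqP => [-> | nki].
  by rewrite ei ej Cf_perm.
case: eqP => [-> | nkj].
  by rewrite ei ej Cf_perm.
have u3 : uniq [tuple i0; j0; k0] by rewrite /= ?inE.
have v3 : uniq [tuple i; j; k].
  have nki2 : k != i by apply/eqP. 
  have nkj2 : j != k by rewrite eq_sym; apply/eqP.
  by rewrite /= !inE negb_or nij andbT eq_sym nki2 nkj2.
have [q Hq] := ntrans_perm c3 u3 v3.
have ei' : i = q i0 by exact: (Hq ord0).
have ej' : j = q j0 by exact: (Hq (lift ord0 ord0)).
have ek' : k = q k0 by exact: (Hq (lift ord0 (lift ord0 ord0))).
by rewrite ei' ej' ek' Cf_perm.
Qed.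

Lemma Cf_sum i j : \sum_l Cf i j l = 0.
Proof.
rewrite /Cf -covp_sumr covpC.
rewrite (covp_ext (f' := fun _ => \sum_l phi l) (g' := fun s : 'S_n => K (s i) (s j))) //.
  exact: covp_cstl.
by move=> s; rewrite [in RHS](reindex_inj (@perm_inj _ s)).
Qed.

End Pattern.
Lemma natr_andb (R : realFieldType) (a b : bool) : ((a && b)%:R : R) = a%:R * b%:R.
Proof. by case: a; case: b; rewrite ?mul1r ?mul0r. Qed.

Lemma natr_leqNgt (R : realFieldType) (t j : nat) : ((t <= j)%N%:R : R) = 1 - (j < t)%N%:R.
Proof. by rewrite leqNgt; case: (j < t)%N; rewrite ?subr0 ?subrr. Qed.

Section Weights.
Variable R : realFieldType.
Variable n t : nat.
Hypothesis Ht2 : (2 <= t)%N.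
Hypothesis Htn : (t <= n - 2)%N.

Lemma tn : (t <= n)%N.
Proof. by apply: (leq_trans Htn); rewrite leq_subr. Qed.

Lemma sum_lt : \sum_(j < n) ((j < t)%N%:R : R) = t%:R.
Proof.
rewrite -(big_mkord xpredT (fun j => ((j < t)%N%:R : R))) (@big_cat_nat _ _ _ t) /= ?tn //.
rewrite (eq_big_nat _ _ (F2 := fun _ => (1 : R))); last by move=> i /andP[_ ->].
rewrite [X in _ + X](eq_big_nat _ _ (F2 := fun _ => (0 : R))); last first.
  by move=> i /andP[h _]; rewrite ltnNge h.
by rewrite !sumr_const_nat mul0rn addr0 subn0.
Qed.

Lemma sum_ge : \sum_(j < n) ((t <= j)%N%:R : R) = (n - t)%:R.
Proof.
rewrite (eq_bigr (fun j : 'I_n => 1 - ((j < t)%N%:R : R))); last by move=> j _; rewrite natr_leqNgt.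
by rewrite sumrB sum_lt sumr_const card_ord natrB ?tn // mulr1n.
Qed.

Definition wW (i j : 'I_n) : R :=
  ((i < t)%N && (j < t)%N)%:R / (n * (t - 1))%:R +
  ((t <= i)%N && (t <= j)%N)%:R / (n * (n - t - 1))%:R.

Lemma n0 : (n%:R : R) != 0.
Proof. by rewrite pnatr_eq0 -lt0n; have := tn; lia. Qed.
Lemma t10 : ((t - 1)%:R : R) != 0.
Proof. by rewrite pnatr_eq0 -lt0n; lia. Qed.
Lemma nt10 : ((n - t - 1)%:R : R) != 0.
Proof. by rewrite pnatr_eq0 -lt0n; lia. Qed.

Lemma sumA (k : 'I_n) : \sum_(j < n) (((k < t)%N && (j < t)%N)%:R : R) = (k < t)%N%:R * t%:R.
Proof.
rewrite -sum_lt mulr_sumr; apply: eq_bigr => j _; exact: natr_andb.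
Qed.
Lemma sumB (k : 'I_n) : \sum_(j < n) (((t <= k)%N && (t <= j)%N)%:R : R) = (t <= k)%N%:R * (n - t)%:R.
Proof.
rewrite -sum_ge mulr_sumr; apply: eq_bigr => j _; exact: natr_andb.
Qed.

Lemma wW_row k : \sum_(j | j != k) wW k j = n%:R^-1.
Proof.
have e : \sum_j wW k j = wW k k + \sum_(j | j != k) wW k j by rewrite (bigD1 k).
apply: (addrI (wW k k)); rewrite -e /wW big_split /= -!mulr_suml sumA sumB.
have := t10; have := nt10; have := n0.
rewrite !natrM !natrB ?tn //; try lia.
case: (ltnP k t) => _ /= h1 h2 h3; field; rewrite ?h1 ?h2 ?h3 //=; apply/and3P; split=> //.
Qed.

Lemma wW_sym i j : wW i j = wW j i.
Proof. by rewrite /wW (andbC (i < t)%N) (andbC (t <= i)%N). Qed.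

Lemma wW_col k : \sum_(i | i != k) wW i k = n%:R^-1.
Proof. rewrite -(wW_row k); apply: eq_bigr => i _; exact: wW_sym. Qed.

Lemma wW_tot : \sum_i \sum_(j | j != i) wW i j = 1.
Proof.
rewrite (eq_bigr (fun _ => n%:R^-1)); last by move=> i _; exact: wW_row.
by rewrite sumr_const card_ord -[_ *+ n]mulr_natr mulVf // n0.
Qed.

End Weights.

Section Sums.
Variable R : realFieldType.
Variable n : nat.

Lemma sum2_lin (F A B : 'I_n -> 'I_n -> R) (c1 c2 : R) :
  \sum_i \sum_(j | j != i) F i j * (A i j * c1 + B i j * c2) =
  (\sum_i \sum_(j | j != i) F i j * A i j) * c1 + (\sum_i \sum_(j | j != i) F i j * B i j) * c2.
Proof.
rewrite !mulr_suml -big_split; apply: eq_bigr => i _.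
rewrite !mulr_suml -big_split; apply: eq_bigr => j _ /=; ring.
Qed.

Lemma sum2_swap (G : 'I_n -> 'I_n -> R) :
  \sum_i \sum_(j | j != i) G i j = \sum_j \sum_(i | i != j) G i j.
Proof.
under eq_bigr => i _ do rewrite big_mkcond.
rewrite exchange_big; apply: eq_bigr => j _; rewrite [RHS]big_mkcond /=.
by apply: eq_bigr => i _; rewrite eq_sym.
Qed.

Lemma sum_delta (k : 'I_n) (G : 'I_n -> R) : \sum_i (k == i)%:R * G i = G k.
Proof.
rewrite (bigD1 k) //= eqxx mul1r big1 ?addr0 // => i /negbTE.
by rewrite eq_sym => ->; rewrite mul0r.
Qed.

Lemma sum_perm_neq (s : 'S_n) (F : 'I_n -> R) i :
  \sum_(j | j != i) F (s j) = \sum_(b | b != s i) F b.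
Proof.
rewrite [in RHS](reindex_inj (@perm_inj _ s)); apply: eq_bigl => j.
by rewrite (inj_eq (@perm_inj _ s)).
Qed.
End Sums.

Section Expand.
Variable R : realFieldType.
Variable n t : nat.
Hypothesis Ht2 : (2 <= t)%N.
Hypothesis Htn : (t <= n - 2)%N.

Let E1 : ((t-1)%:R : R) = t%:R - 1.
Proof. by rewrite natrB //; lia. Qed.
Let E2 : ((n-t)%:R : R) = n%:R - t%:R.
Proof. by rewrite natrB //; lia. Qed.
Let E3 : ((n-t-1)%:R : R) = n%:R - t%:R - 1.
Proof. by rewrite natrB -?E2 //; lia. Qed.
Let E4 : ((n-1)%:R : R) = n%:R - 1.
Proof. by rewrite natrB //; lia. Qed.
Let nz1 : (t%:R : R) != 0. Proof. by rewrite pnatr_eq0; lia. Qed.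
Let nz2 : (t%:R - 1 : R) != 0. Proof. by rewrite -E1 pnatr_eq0; lia. Qed.
Let nz3 : (n%:R : R) != 0. Proof. by rewrite pnatr_eq0; lia. Qed.
Let nz4 : (n%:R - t%:R : R) != 0. Proof. by rewrite -E2 pnatr_eq0; lia. Qed.
Let nz5 : (n%:R - t%:R - 1 : R) != 0. Proof. by rewrite -E3 pnatr_eq0; lia. Qed.
Let nz6 : (n%:R - 1 : R) != 0. Proof. by rewrite -E4 pnatr_eq0; lia. Qed.

Lemma pk_sum (K : 'M[R]_n) s (P : 'I_n -> 'I_n -> R) :
  \sum_i \sum_(j | j != i) permute_kernel K s i j * P i j =
  \sum_i \sum_(j | j != i) K (s i) (s j) * P i j.
Proof. by apply: eq_bigr => i _; apply: eq_bigr => j _; rewrite mxE. Qed.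

Lemma Wstat_expand (K : 'M[R]_n) (s : 'S_n) :
  Wstat (permute_kernel K s) t = \sum_i \sum_(j | j != i) K (s i) (s j) * wW R t i j.
Proof.
rewrite /Wstat /alpha /beta /wW.
rewrite (sum2_lin (fun i j => K (s i) (s j)) (fun i j => ((i < t)%N && (j < t)%N)%:R)
   (fun i j => ((t <= i)%N && (t <= j)%N)%:R)).
rewrite (pk_sum K s (fun i j => ((i < t)%N && (j < t)%N)%:R)).
rewrite (pk_sum K s (fun i j => ((t <= i)%N && (t <= j)%N)%:R)).
rewrite !natrM E1 E2 E3; field.
by rewrite nz1 nz2 nz3 nz4 nz5.
Qed.

Definition eW (k : 'I_n) : R := (k < t)%N%:R - 2^-1.
Definition phiK (K : 'M[R]_n) (a : 'I_n) : R := \sum_(b | b != a) (K a b + K b a).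

Lemma Dstat_expand (K : 'M[R]_n) (s : 'S_n) :
  Dstat (permute_kernel K s) t = (n * (n - 1))%:R^-1 * \sum_k eW k * phiK K (s k).
Proof.
rewrite /Dstat /alpha /beta.
rewrite (pk_sum K s (fun i j => ((i < t)%N && (j < t)%N)%:R)).
rewrite (pk_sum K s (fun i j => ((t <= i)%N && (t <= j)%N)%:R)).
set S1 := \sum_i _. set S2 := \sum_i _.
have -> : (t * (t - 1))%:R / (n * (n - 1))%:R * ((t * (t - 1))%:R^-1 * S1) -
  ((n - t) * (n - t - 1))%:R / (n * (n - 1))%:R * (((n - t) * (n - t - 1))%:R^-1 * S2) =
  (n * (n - 1))%:R^-1 * (S1 - S2).
  by rewrite !natrM E1 E2 E3 E4; field; rewrite nz1 nz2 nz3 nz4 nz5 nz6.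
suff -> : S1 - S2 = \sum_k eW k * phiK K (s k) by [].
have -> : S1 - S2 = \sum_i \sum_(j | j != i) K (s i) (s j) * (eW i + eW j).
  have -> : S1 - S2 = S1 * 1 + S2 * (-1) by ring.
  rewrite [RHS](eq_bigr (fun i => \sum_(j | j != i) K (s i) (s j) *
     (((i < t)%N && (j < t)%N)%:R * 1 + ((t <= i)%N && (t <= j)%N)%:R * (-1)))); last first.
    move=> i _; apply: eq_bigr => j _; congr (_ * _).
    by rewrite /eW !natr_andb (natr_leqNgt _ t i) (natr_leqNgt _ t j); field.
  by rewrite (sum2_lin (fun i j => K (s i) (s j)) (fun i j => ((i < t)%N && (j < t)%N)%:R)
   (fun i j => ((t <= i)%N && (t <= j)%N)%:R)).
rewrite (eq_bigr (fun i => \sum_(j | j != i) eW i * K (s i) (s j) +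
   \sum_(j | j != i) eW j * K (s i) (s j))); last first.
  by move=> i _; rewrite -big_split; apply: eq_bigr => j _ /=; ring.
rewrite big_split /= [X in _ + X](sum2_swap (fun i j => eW j * K (s i) (s j))) -big_split /=.
apply: eq_bigr => k _.
rewrite /phiK -(sum_perm_neq s (fun b => K (s k) b + K b (s k))) big_split mulrDr !mulr_sumr.
by [].
Qed.
End Expand.

Section Zero.
Variable R : realFieldType.
Variable n t : nat.
Hypothesis Ht2 : (2 <= t)%N.
Hypothesis Htn : (t <= n - 2)%N.

Lemma wsum_pattern (C : 'I_n -> 'I_n -> R) (X Y1 Y2 : R) (k : 'I_n) :
  (forall i j, i != j -> C i j = X + (k == i)%:R * (Y1 - X) + (k == j)%:R * (Y2 - X)) ->
  Y1 + Y2 + (n%:R - 2) * X = 0 ->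
  \sum_i \sum_(j | j != i) wW R t i j * C i j = 0.
Proof.
move=> HC HY.
rewrite (eq_bigr (fun i => \sum_(j | j != i) (X * wW R t i j + (Y1 - X) * ((k == i)%:R * wW R t i j)
   + (Y2 - X) * ((k == j)%:R * wW R t i j)))); last first.
  move=> i _; apply: eq_bigr => j nji; rewrite HC 1?eq_sym //; ring.
rewrite (eq_bigr (fun i => X * \sum_(j | j != i) wW R t i j + (Y1 - X) * ((k == i)%:R * \sum_(j | j != i) wW R t i j)
   + (Y2 - X) * \sum_(j | j != i) ((k == j)%:R * wW R t i j))); last first.
  by move=> i _; rewrite [LHS]big_split [X in X + _ = _]big_split /= -!mulr_sumr.
rewrite !big_split /= -!mulr_sumr (wW_tot _ Ht2 Htn) sum_delta (wW_row _ Ht2 Htn _).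
rewrite (sum2_swap (fun i j => (k == j)%:R * wW R t i j)) /=.
rewrite (eq_bigr (fun j => (k == j)%:R * \sum_(i | i != j) wW R t i j)); last by move=> j _; rewrite mulr_sumr.
rewrite sum_delta (wW_col _ Ht2 Htn _).
have nz : (n%:R : R) != 0 by rewrite pnatr_eq0; lia.
apply: (mulfI nz); rewrite mulr0 -[RHS]HY; field; exact: nz.
Qed.

Variables K K' : 'M[R]_n.

Lemma cov_WD :
  covp (fun s => Wstat (permute_kernel K s) t) (fun s => Dstat (permute_kernel K' s) t) = 0.
Proof.
have H3 : (3 <= n)%N by lia.
rewrite (covp_ext (f' := fun s : 'S_n => \sum_i \sum_(j | j != i) wW R t i j * K (s i) (s j))
   (g' := fun s : 'S_n => (n * (n - 1))%:R^-1 * \sum_k eW R t k * phiK K' (s k))); last first.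
- by move=> s; rewrite (Dstat_expand Ht2 Htn).
- move=> s; rewrite (Wstat_expand Ht2 Htn); apply: eq_bigr => i _; apply: eq_bigr => j _; exact: mulrC.
rewrite covpZr covp_sumr big1 ?mulr0 // => k _.
rewrite covpZr.
suff -> : covp (fun s : 'S_n => \sum_i \sum_(j | j != i) wW R t i j * K (s i) (s j))
   (fun s => phiK K' (s k)) = 0 by rewrite mulr0.
rewrite covp_suml (eq_bigr (fun i => \sum_(j | j != i) wW R t i j * Cf K (phiK K') i j k)); last first.
  by move=> i _; rewrite covp_suml; apply: eq_bigr => j _; rewrite covpZl.
set X := Cf K (phiK K') (i0 H3) (j0 H3) (k0 H3).
set Y1 := Cf K (phiK K') (i0 H3) (j0 H3) (i0 H3).
set Y2 := Cf K (phiK K') (i0 H3) (j0 H3) (j0 H3).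
have pat : forall i j k, i != j -> Cf K (phiK K') i j k = X + (k == i)%:R * (Y1 - X) + (k == j)%:R * (Y2 - X).
  move=> i j l nij; rewrite (Cf_pattern _ _ H3 l nij) -/X -/Y1 -/Y2.
  case: (eqVneq l i) => [-> | nli]; first by rewrite (negbTE nij) /=; ring.
  by case: (eqVneq l j) => [_ | nlj] /=; ring.
apply: (wsum_pattern (k := k) (X := X) (Y1 := Y1) (Y2 := Y2)) => [i j nij|].
  exact: pat.
have := Cf_sum K (phiK K') (i0 H3) (j0 H3).
have nij0 : i0 H3 != j0 H3 by [].
rewrite (eq_bigr (fun l => X + (i0 H3 == l)%:R * (Y1 - X) + (j0 H3 == l)%:R * (Y2 - X))); last first.
  by move=> l _; rewrite pat // [i0 H3 == l]eq_sym [j0 H3 == l]eq_sym.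
rewrite !big_split /= !sum_delta sumr_const card_ord => <-.
rewrite -[X *+ n]mulr_natl; ring.
Qed.
End Zero.

Lemma covp_lin2r (R : realFieldType) n (f g1 g2 : 'S_n -> R) (c1 c2 : R) :
  covp f (fun s => c1 * g1 s + c2 * g2 s) = c1 * covp f g1 + c2 * covp f g2.
Proof. by rewrite covpC covpDl !covpZl (covpC g1) (covpC g2). Qed.

Lemma covp_lin4l (R : realFieldType) n (g f1 f2 f3 f4 : 'S_n -> R) (a1 a2 a3 a4 : R) :
  covp (fun s => a1 * f1 s + a2 * f2 s + a3 * f3 s + a4 * f4 s) g =
  a1 * covp f1 g + a2 * covp f2 g + a3 * covp f3 g + a4 * covp f4 g.
Proof. by rewrite !covpDl !covpZl. Qed.

Lemma solve2 (R : realFieldType) (a b c x y : R) : a * b - c ^+ 2 != 0 ->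
  x * a + y * c = 0 -> x * c + y * b = 0 -> x = 0 /\ y = 0.
Proof.
move=> h e1 e2.
have hx : x * (a * b - c ^+ 2) = 0.
  by transitivity (b * (x * a + y * c) - c * (x * c + y * b)); [ring | rewrite e1 e2; ring].
have hy : y * (a * b - c ^+ 2) = 0.
  by transitivity (a * (x * c + y * b) - c * (x * a + y * c)); [ring | rewrite e1 e2; ring].
move/eqP: hx; rewrite mulf_eq0 (negbTE h) orbF => /eqP ->.
by move/eqP: hy; rewrite mulf_eq0 (negbTE h) orbF => /eqP ->.
Qed.

Unset Implicit Arguments.
Theorem theorem2 (R : realFieldType) (n : nat) (K1 K2 : 'M[R]_n) (t : nat) :
  (4 <= n)%N -> (2 <= t)%N -> (t <= n - 2)%N ->
  K1^T = K1 -> K2^T = K2 ->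
  let W1 := fun s => Wstat (permute_kernel K1 s) t in
  let W2 := fun s => Wstat (permute_kernel K2 s) t in
  let D1 := fun s => Dstat (permute_kernel K1 s) t in
  let D2 := fun s => Dstat (permute_kernel K2 s) t in
  varp W1 * varp W2 != covp W1 W2 ^+ 2 ->
  varp D1 * varp D2 != covp D1 D2 ^+ 2 ->
  varp (fun s => D1 s + D2 s) != 0 ->
  varp (fun s => W1 s + W2 s) != 0 ->
  Sigma K1 K2 t \in unitmx.
Proof.
move=> Hn Ht2 Htn _ _ W1 W2 D1 D2 hW hD _ _.
rewrite unitmxE unitfE; apply/negP => /det0P [v nv0 vS].
pose A (k : 'I_4) s := avec K1 K2 t s k ord0.
pose Xf s := \sum_k v ord0 k * A k s.
have hl : forall l, covp Xf (A l) = 0.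
  move=> l; rewrite /Xf covp_suml.
  have := congr1 (fun M : 'M[R]_(1,4) => M ord0 l) vS; rewrite !mxE => H; apply: (etrans _ H).
  by apply: eq_bigr => k _; rewrite covpZl mxE.
have eX : forall s, Xf s = v ord0 ord0 * alpha (permute_kernel K1 s) t
   + v ord0 (lift ord0 ord0) * beta (permute_kernel K1 s) t
   + v ord0 (lift ord0 (lift ord0 ord0)) * alpha (permute_kernel K2 s) t
   + v ord0 (lift ord0 (lift ord0 (lift ord0 ord0))) * beta (permute_kernel K2 s) t.
  by move=> s; rewrite /Xf !big_ord_recl big_ord0 /A !mxE /=; ring.
set v0 := v ord0 ord0. set v1 := v ord0 (lift ord0 ord0).
set v2 := v ord0 (lift ord0 (lift ord0 ord0)).
set v3 := v ord0 (lift ord0 (lift ord0 (lift ord0 ord0))).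
pose a1 s := alpha (permute_kernel K1 s) t. pose b1 s := beta (permute_kernel K1 s) t.
pose a2 s := alpha (permute_kernel K2 s) t. pose b2 s := beta (permute_kernel K2 s) t.
pose p : R := t%:R / n%:R. pose q : R := (n - t)%:R / n%:R.
pose r : R := (t * (t - 1))%:R / (n * (n - 1))%:R.
pose u : R := ((n - t) * (n - t - 1))%:R / (n * (n - 1))%:R.
have eW1 : forall s, W1 s = p * a1 s + q * b1 s by [].
have eW2 : forall s, W2 s = p * a2 s + q * b2 s by [].
have eD1 : forall s, D1 s = r * a1 s + (- u) * b1 s by move=> s; rewrite /D1 /Dstat mulNr.
have eD2 : forall s, D2 s = r * a2 s + (- u) * b2 s by move=> s; rewrite /D2 /Dstat mulNr.
have hA0 : covp Xf a1 = 0 by rewrite -(hl ord0); apply: covp_ext => s //; rewrite /A /avec mxE.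
have hA1 : covp Xf b1 = 0 by rewrite -(hl (lift ord0 ord0)); apply: covp_ext => s //; rewrite /A /avec mxE.
have hA2 : covp Xf a2 = 0 by rewrite -(hl (lift ord0 (lift ord0 ord0))); apply: covp_ext => s //; rewrite /A /avec mxE.
have hA3 : covp Xf b2 = 0.
  by rewrite -(hl (lift ord0 (lift ord0 (lift ord0 ord0)))); apply: covp_ext => s //; rewrite /A /avec mxE.
have hXW1 : covp Xf W1 = 0 by rewrite (covp_ext (f' := Xf) _ eW1) // covp_lin2r hA0 hA1; ring.
have hXW2 : covp Xf W2 = 0 by rewrite (covp_ext (f' := Xf) _ eW2) // covp_lin2r hA2 hA3; ring.
have hXD1 : covp Xf D1 = 0 by rewrite (covp_ext (f' := Xf) _ eD1) // covp_lin2r hA0 hA1; ring.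
have hXD2 : covp Xf D2 = 0 by rewrite (covp_ext (f' := Xf) _ eD2) // covp_lin2r hA2 hA3; ring.
have pp : 0 < p by rewrite /p divr_gt0 ?ltr0n //; lia.
have qp : 0 < q by rewrite /q divr_gt0 ?ltr0n //; lia.
have rp : 0 < r by rewrite /r divr_gt0 ?ltr0n ?muln_gt0 //; apply/andP; split; lia.
have up : 0 < u by rewrite /u divr_gt0 ?ltr0n ?muln_gt0 //; apply/andP; split; lia.
pose De := p * u + q * r.
have Dep : De != 0 by rewrite gt_eqF // addr_gt0 // mulr_gt0.
pose c1 := (v0 * u + v1 * r) / De. pose d1 := (v0 * q - v1 * p) / De.
pose c2 := (v2 * u + v3 * r) / De. pose d2 := (v2 * q - v3 * p) / De.
have eXf : forall s, Xf s = c1 * W1 s + d1 * D1 s + c2 * W2 s + d2 * D2 s.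
  move=> s; rewrite eX eW1 eW2 eD1 eD2 /c1 /d1 /c2 /d2 -/(a1 s) -/(b1 s) -/(a2 s) -/(b2 s).
  rewrite /v0 /v1 /v2 /v3 /De; field; exact: Dep.
have cX : forall g, covp Xf g = c1 * covp W1 g + d1 * covp D1 g + c2 * covp W2 g + d2 * covp D2 g.
  by move=> g; rewrite (covp_ext (g' := g) eXf) // covp_lin4l.
have z11 : covp D1 W1 = 0 by rewrite covpC (cov_WD Ht2 Htn).
have z21 : covp D2 W1 = 0 by rewrite covpC (cov_WD Ht2 Htn).
have z12 : covp D1 W2 = 0 by rewrite covpC (cov_WD Ht2 Htn).
have z22 : covp D2 W2 = 0 by rewrite covpC (cov_WD Ht2 Htn).
have y11 : covp W1 D1 = 0 by rewrite (cov_WD Ht2 Htn).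
have y21 : covp W2 D1 = 0 by rewrite (cov_WD Ht2 Htn).
have y12 : covp W1 D2 = 0 by rewrite (cov_WD Ht2 Htn).
have y22 : covp W2 D2 = 0 by rewrite (cov_WD Ht2 Htn).
have eq1 := hXW1; rewrite cX z11 z21 in eq1.
have eq2 := hXW2; rewrite cX z12 z22 in eq2.
have eq3 := hXD1; rewrite cX y11 y21 in eq3.
have eq4 := hXD2; rewrite cX y12 y22 in eq4.
rewrite /varp in hW hD.
have cW : covp W2 W1 = covp W1 W2 by exact: covpC.
have cD : covp D2 D1 = covp D1 D2 by exact: covpC.
rewrite cW in eq1; rewrite cD in eq3.
have dW : covp W1 W1 * covp W2 W2 - covp W1 W2 ^+ 2 != 0 by rewrite subr_eq0.
have dD : covp D1 D1 * covp D2 D2 - covp D1 D2 ^+ 2 != 0 by rewrite subr_eq0.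
rewrite !mulr0 !addr0 in eq1 eq2; rewrite !mulr0 !add0r !addr0 in eq3 eq4.
have [c10 c20] := solve2 dW eq1 eq2.
have [d10 d20] := solve2 dD eq3 eq4.
have ev0 : v0 = c1 * p + d1 * r by rewrite /c1 /d1 /De; field; exact: Dep.
have ev1 : v1 = c1 * q - d1 * u by rewrite /c1 /d1 /De; field; exact: Dep.
have ev2 : v2 = c2 * p + d2 * r by rewrite /c2 /d2 /De; field; exact: Dep.
have ev3 : v3 = c2 * q - d2 * u by rewrite /c2 /d2 /De; field; exact: Dep.
rewrite c10 d10 c20 d20 !mul0r ?subrr ?addr0 in ev0 ev1 ev2 ev3.
move/negP: nv0; apply; apply/eqP/rowP => k; rewrite mxE.
case: k => [[|[|[|[|m]]]] hk] //=.
- by rewrite -[RHS]ev0 /v0; congr (v _ _); apply: val_inj.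
- by rewrite -[RHS]ev1 /v1; congr (v _ _); apply: val_inj.
- by rewrite -[RHS]ev2 /v2; congr (v _ _); apply: val_inj.
- by rewrite -[RHS]ev3 /v3; congr (v _ _); apply: val_inj.
Qed.
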